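(* For any $4$-regular graph $G$ on $n$ vertices, where $n=20$ or $n=21$, we have $\mathcal{E}(G)<2(n-1)$.
   Context: All graphs are finite, simple and undirected. The energy $\mathcal{E}(G)$ of a graph $G$ is the sum of the absolute values of the eigenvalues of its adjacency matrix. *)

(* Defs.v *)
From HB Require Import structures.
From mathcomp Require Import all_boot all_order all_algebra all_field.
Set Implicit Arguments. Unset Strict Implicit. Unset Printing Implicit Defensive.
Import Order.TTheory GRing.Theory Num.Theory.
Local Open Scope ring_scope.

Definition simple_graph (n : nat) (e : rel 'I_n) : Prop :=
  symmetric e /\ irreflexive e.

Definition regular (n k : nat) (e : rel 'I_n) : Prop :=
  forall v : 'I_n, #|[set u | e v u]| = k.

Definition adjmx (n : nat) (e : rel 'I_n) : 'M[algC]_n :=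
  \matrix_(i, j) (e i j)%:R.

(* The eigenvalues (with algebraic multiplicity) of a square matrix: the
   roots of its characteristic polynomial, which splits over algC. *)
Definition eigenvalues (n : nat) (A : 'M[algC]_n) : seq algC :=
  sval (closed_field_poly_normal (char_poly A)).

Definition energy (n : nat) (e : rel 'I_n) : algC :=
  \sum_(z <- eigenvalues (adjmx e)) `|z|.

(* Main.v *)
From HB Require Import structures.
From mathcomp Require Import all_boot all_order all_algebra all_field.
From mathcomp Require Import spectral sesquilinear.
Require Import Defs.
From mathcomp Require Import lra ring.
Import Order.TTheory GRing.Theory Num.Theory.
Local Open Scope ring_scope.
Section Key.
Variable R : realFieldType.

Lemma sum_poly_ge0 (I : finType) (P : pred I) (s : I -> R) (c0 c1 c2 c4 : R) :
  (forall i, P i -> 0 <= c0 + c1 * s i + c2 * s i ^+ 2 + c4 * s i ^+ 4) ->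
  0 <= c0 * #|P|%:R + c1 * (\sum_(i | P i) s i) + c2 * (\sum_(i | P i) s i ^+ 2)
       + c4 * (\sum_(i | P i) s i ^+ 4).
Proof.
move=> H.
have -> : c0 * #|P|%:R + c1 * (\sum_(i | P i) s i) + c2 * (\sum_(i | P i) s i ^+ 2)
       + c4 * (\sum_(i | P i) s i ^+ 4) =
  \sum_(i | P i) (c0 + c1 * s i + c2 * s i ^+ 2 + c4 * s i ^+ 4).
  rewrite !big_split /= -!mulr_sumr; congr (_ + _ + _ + _).
  by rewrite sumr_const mulr_natr.
exact: sumr_ge0.
Qed.

Lemma sq_abs (x : R) : x ^+ 2 = `|x| ^+ 2.
Proof. by rewrite real_normK ?num_real. Qed.
Lemma q_abs (x : R) : x ^+ 4 = `|x| ^+ 4.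
Proof. by rewrite (_ : 4 = 2 * 2)%N // !exprM -sq_abs. Qed.

Lemma key (I : finType) (P : pred I) (x : I -> R) (m : nat) (S Q T t : R) :
  #|P| = m.+1 -> 0 < t ->
  \sum_(i | P i) x i ^+ 2 = S -> Q <= \sum_(i | P i) x i ^+ 4 ->
  (forall M, 0 <= M -> (M - t) ^+ 2 + (2 * t * T - m.+1%:R * t ^+ 2 - S) <= 0 ->
     0 < (2 * t * T - m.+1%:R * t ^+ 2 - S) * (M + t) ^+ 2 + (Q - 2 * t ^+ 2 * S + m.+1%:R * t ^+ 4)) ->
  \sum_(i | P i) `|x i| < T.
Proof.
move=> cP t0 hS hQ hC.
have [j0 Pj0] : exists j, P j.
  by apply/existsP; rewrite -lt0n -/(#|P|) cP.
case: (arg_maxP (fun i => `|x i|) Pj0) => j Pj /= Hmax.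
set M := `|x j|.
set P' := [pred i | P i && (i != j)].
have cP' : #|P'| = m.
  by move: cP; rewrite (cardD1x Pj) => -[].
have M0 : 0 <= M by exact: normr_ge0.
set R1 := \sum_(i | P' i) `|x i|.
set S2 := \sum_(i | P' i) `|x i| ^+ 2.
set S4 := \sum_(i | P' i) `|x i| ^+ 4.
have eS : M ^+ 2 + S2 = S.
  rewrite -hS (bigD1 j Pj) /= sq_abs; congr (_ + _).
  by apply: eq_bigr => i _; rewrite sq_abs.
have eQ : Q <= M ^+ 4 + S4.
  move: hQ; rewrite (bigD1 j Pj) /= q_abs.
  by under eq_bigr => i _ do rewrite q_abs.
have eT : \sum_(i | P i) `|x i| = M + R1 by rewrite (bigD1 j Pj).
rewrite eT.
have E2 := @sum_poly_ge0 I P' (fun i => `|x i|) (t ^+ 2) (- (2 * t)) 1 0.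
rewrite cP' -/R1 -/S2 -/S4 in E2.
have {}E2 : 0 <= t ^+ 2 * m%:R + - (2 * t) * R1 + 1 * S2 + 0 * S4.
  apply: E2 => i _; have := sqr_ge0 (`|x i| - t); nra.
set K := (M + t) ^+ 2.
have E1 := @sum_poly_ge0 I P' (fun i => `|x i|) (2 * t ^+ 2 * K - K * t ^+ 2 - t ^+ 4)
   (- (2 * t * K)) (K + 2 * t ^+ 2) (-1).
rewrite cP' -/R1 -/S2 -/S4 in E1.
have {}E1 : 0 <= (2 * t ^+ 2 * K - K * t ^+ 2 - t ^+ 4) * m%:R + - (2 * t * K) * R1
      + (K + 2 * t ^+ 2) * S2 + -1 * S4.
  apply: E1 => i /andP [Pi _].
  have hi : `|x i| <= M := Hmax i Pi.
  have hi0 : 0 <= `|x i| by exact: normr_ge0.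
  set s := `|x i| in hi hi0 *.
  have -> : (2 * t ^+ 2 * K - K * t ^+ 2 - t ^+ 4) + - (2 * t * K) * s
      + (K + 2 * t ^+ 2) * s ^+ 2 + -1 * s ^+ 4 = (s - t) ^+ 2 * ((M - s) * (M + s + 2 * t)).
    rewrite /K; ring.
  apply: mulr_ge0; first exact: sqr_ge0.
  apply: mulr_ge0; lra.
have mS : m.+1%:R = m%:R + 1 :> R by rewrite -addn1 natrD.
rewrite mS in hC.
set g := (M - t) ^+ 2 + (2 * t * T - (m%:R + 1) * t ^+ 2 - S).
have [gpos|gneg] := ltP 0 g.
  rewrite /g in gpos; nra.
have H := hC M M0 gneg.
have K0 : 0 < K by rewrite /K; apply: exprn_gt0; lra.
have tK : 0 < t * K by apply: mulr_gt0.
rewrite /K in E1 tK H; nra.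
Qed.
End Key.
Lemma cond20 (R : realFieldType) (M : R) : 0 <= M ->
  (M - 17/10) ^+ 2 + (2 * (17/10) * 34 - (19%:R) * (17/10) ^+ 2 - 64) <= 0 ->
  0 < (2 * (17/10) * 34 - 19%:R * (17/10) ^+ 2 - 64) * (M + 17/10) ^+ 2 + (304 - 2 * (17/10) ^+ 2 * 64 + 19%:R * (17/10) ^+ 4).
Proof. move=> M0 h. nra. Qed.

Lemma cond21 (R : realFieldType) (M : R) : 0 <= M ->
  (M - 17/10) ^+ 2 + (2 * (17/10) * 36 - (20%:R) * (17/10) ^+ 2 - 68) <= 0 ->
  0 < (2 * (17/10) * 36 - 20%:R * (17/10) ^+ 2 - 68) * (M + 17/10) ^+ 2 + (332 - 2 * (17/10) ^+ 2 * 68 + 20%:R * (17/10) ^+ 4).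
Proof. move=> M0 h. nra. Qed.
Lemma char_poly_sim (F : fieldType) (n : nat) (P D : 'M[F]_n) : P \in unitmx ->
  char_poly (invmx P *m D *m P) = char_poly D.
Proof.
move=> Pu; rewrite /char_poly /char_poly_mx.
set f := (@polyC F).
rewrite !map_mxM map_invmx.
set P' := map_mx f P.
have P'u : P' \in unitmx by rewrite map_unitmx.
have -> : 'X%:M - invmx P' *m map_mx f D *m P' = invmx P' *m ('X%:M - map_mx f D) *m P'.
  rewrite mulmxBr mulmxBl mul_mx_scalar -scalemxAl mulVmx //.
  by rewrite scalemx1.
by rewrite !det_mulmx mulrC mulrA -det_mulmx mulmxV // det1 mul1r.
Qed.

Lemma tr_conj (F : fieldType) (n : nat) (P X : 'M[F]_n) : P \in unitmx ->
  \tr (invmx P *m X *m P) = \tr X.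
Proof. by move=> Pu; rewrite mxtrace_mulC mulmxA mulmxV // mul1mx. Qed.

Lemma conj_mul (F : fieldType) (n : nat) (P X Y : 'M[F]_n) : P \in unitmx ->
  (invmx P *m X *m P) *m (invmx P *m Y *m P) = invmx P *m (X *m Y) *m P.
Proof. by move=> Pu; rewrite !mulmxA mulmxK. Qed.

Section Spec.
Variables (n : nat) (e : rel 'I_n).
Hypothesis esym : symmetric e.

Local Notation A := (adjmx e).

Lemma A_herm : A \is hermsymmx.
Proof.
apply: realsym_hermsym.
  apply/is_hermitianmxP; rewrite expr0 scale1r; apply/matrixP => i j.
  by rewrite !mxE esym.
by apply/mxOverP => i j; rewrite mxE realn.
Qed.

Local Notation P := (spectralmx A).
Local Notation d := (spectral_diag A).

Lemma hA : A = invmx P *m diag_mx d *m P.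
Proof. exact/orthomx_spectralP/hermitian_normalmx/A_herm. Qed.

Lemma d_real i : d 0 i \is Num.real.
Proof. by have /mxOverP := hermitian_spectral_diag_real A_herm; apply. Qed.

Lemma charA : char_poly A = \prod_(z <- [seq d 0 i | i <- enum 'I_n]) ('X - z%:P).
Proof.
rewrite {1}hA char_poly_sim ?spectral_unit // char_poly_trig ?diag_mx_is_trig //.
rewrite big_map big_enum /=; apply: eq_bigr => i _; by rewrite mxE eqxx mulr1n.
Qed.

Lemma perm_eig : perm_eq (eigenvalues A) [seq d 0 i | i <- enum 'I_n].
Proof.
apply: prod_XsubC_eq; rewrite -charA.
rewrite /eigenvalues; case: closed_field_poly_normal => s /= hs.
by rewrite [RHS]hs (monicP (char_poly_monic _)) scale1r.
Qed.

Lemma energyE : energy e = \sum_i `|d 0 i|.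
Proof. by rewrite /energy (perm_big _ perm_eig) big_map big_enum. Qed.

Lemma tr2 : \tr (A *m A) = \sum_i d 0 i ^+ 2.
Proof.
have Pu := spectral_unit A.
rewrite [in LHS]hA conj_mul // tr_conj // mulmx_diag mxtrace_diag.
by apply: eq_bigr => i _; rewrite mxE expr2.
Qed.

Lemma tr4 : \tr ((A *m A) *m (A *m A)) = \sum_i d 0 i ^+ 4.
Proof.
have Pu := spectral_unit A.
rewrite [in LHS]hA !conj_mul // tr_conj // !mulmx_diag mxtrace_diag.
by apply: eq_bigr => i _; rewrite !mxE (_ : 4 = 2 + 2)%N // exprD expr2.
Qed.

Lemma eig4 (v : 'rV[algC]_n) : v != 0 -> v *m A = 4 *: v -> exists i, d 0 i = 4.
Proof.
move=> v0 hv.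
have : root (char_poly A) 4.
  by rewrite -eigenvalue_root_char; apply/eigenvalueP; exists v.
rewrite charA root_prod_XsubC => /mapP [i _ ->]; by exists i.
Qed.
End Spec.

Section Comb.
Variables (n : nat) (e : rel 'I_n).
Hypothesis esym : symmetric e.
Hypothesis eirr : irreflexive e.
Hypothesis ereg : regular 4 e.
Local Notation A := (adjmx e).

Lemma deg i : (\sum_j (e i j : nat) = 4)%N.
Proof.
rewrite -(ereg i) cardsE -sum1_card [RHS]big_mkcond /=.
apply: eq_bigr => j _; rewrite -topredE /=; by case: (e i j).
Qed.

Definition cc i j : nat := (\sum_k (e i k && e k j))%N.

Lemma A2E i j : (A *m A) i j = (cc i j)%:R.
Proof.
rewrite !mxE natr_sum; apply: eq_bigr => k _; rewrite !mxE.
by case: (e i k); case: (e k j); rewrite ?mulr1 ?mulr0 ?mul1r.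
Qed.

Lemma cc_sym i j : cc i j = cc j i.
Proof. by apply: eq_bigr => k _; rewrite andbC !(esym k). Qed.

Lemma cc_diag i : cc i i = 4%N.
Proof. rewrite -(deg i); apply: eq_bigr => k _; by rewrite (esym k) andbb. Qed.

Lemma cc_row i : (\sum_j cc i j = 16)%N.
Proof.
rewrite /cc exchange_big /=.
rewrite (eq_bigr (fun k => (e i k : nat) * 4)%N).
  by rewrite -big_distrl /= deg.
move=> k _; rewrite -(deg k) big_distrr /=; apply: eq_bigr => j _.
by case: (e i k); case: (e k j).
Qed.

Lemma cc_sq i : (28 <= \sum_j cc i j ^ 2)%N.
Proof.
rewrite (bigD1 i) //= cc_diag.
have h := cc_row i; rewrite (bigD1 i) //= cc_diag in h.
have : (\sum_(j | j != i) cc i j <= \sum_(j | j != i) cc i j ^ 2)%N.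
  by apply: leq_sum => j _; case: (cc i j) => // c; rewrite expnS leq_pmulr.
move: h; set a := (\sum_(j | j != i) cc i j)%N; set b := (\sum_(j | j != i) cc i j ^ 2)%N.
move=> h hab; rewrite (_ : 4 ^ 2 = 16)%N //.
have : (a = 12)%N by apply/eqP; rewrite -(eqn_add2l 4) h.
move=> ha; rewrite ha in hab.
by rewrite (_ : 28 = 16 + 12)%N // leq_add2l.
Qed.

Lemma tr2E : \tr (A *m A) = (4 * n)%:R.
Proof.
rewrite /mxtrace (eq_bigr (fun _ => 4%:R)); last by move=> i _; rewrite A2E cc_diag.
by rewrite sumr_const card_ord natrM mulr_natr.
Qed.

Lemma tr4E : (28 * n)%:R <= \tr ((A *m A) *m (A *m A)).
Proof.
rewrite /mxtrace.
have -> : (28 * n)%:R = \sum_(i < n) (28%:R : algC).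
  by rewrite sumr_const card_ord natrM mulr_natr.
apply: ler_sum => i _; rewrite mxE.
rewrite (eq_bigr (fun j => (cc i j ^ 2)%:R)); last first.
  by move=> j _; rewrite !A2E (cc_sym j i) -natrM mulnn.
by rewrite -natr_sum ler_nat cc_sq.
Qed.

Lemma A_ones : (const_mx 1 : 'rV[algC]_n) *m A = 4 *: const_mx 1.
Proof.
apply/rowP => j; rewrite !mxE.
rewrite (eq_bigr (fun i => (e j i : nat)%:R)); last first.
  by move=> i _; rewrite !mxE mul1r esym.
by rewrite -natr_sum deg mulr1.
Qed.
End Comb.

Theorem theorem3p1 (n : nat) (e : rel 'I_n) :
  (n = 20 \/ n = 21)%N ->
  simple_graph e -> regular 4 e ->
  energy e < 2 * (n - 1)%:R.
Proof.
move=> hn [esym eirr] ereg.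
have n0 : (0 < n)%N by case: hn => ->.
have v0 : (const_mx 1 : 'rV[algC]_n) != 0.
  apply/eqP => /rowP /(_ (Ordinal n0)); rewrite !mxE => /eqP; by rewrite oner_eq0.
have [i0 hi0] := @eig4 _ _ esym _ v0 (@A_ones _ _ esym ereg).
rewrite (@energyE _ _ esym).
have h2 := @tr2 _ _ esym; rewrite (@tr2E _ _ esym ereg) in h2.
have h4 := @tr4 _ _ esym; have h4' := @tr4E _ _ esym ereg; rewrite h4 in h4'.
move: hi0 h2 h4'; clear h4.
set d := spectral_diag (adjmx e).
pose r i := in_algR (@d_real _ _ esym i).
have dr i : d 0 i = algRval (r i) by [].
move=> hi0 h2 h4.
have r0 : r i0 = 4 by apply: val_inj; rewrite /= hi0.
have hS : \sum_i r i ^+ 2 = (4 * n)%:R.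
  by apply: val_inj; rewrite /= raddf_sum rmorph_nat h2.
have hQ : (28 * n)%:R <= \sum_i r i ^+ 4.
  suff : algRval (28 * n)%:R <= algRval (\sum_i r i ^+ 4) by [].
  rewrite rmorph_nat raddf_sum; exact: h4.
have -> : \sum_i `|d 0 i| = algRval (\sum_i `|r i|) by rewrite raddf_sum.
have -> : 2 * (n - 1)%:R = algRval (2 * (n - 1)%:R) by rewrite rmorphM /= !rmorph_nat.
change (\sum_i `|r i| < 2 * (n - 1)%:R).
rewrite (bigD1 i0) //= in hS; rewrite (bigD1 i0) //= in hQ; rewrite (bigD1 i0) //=.
rewrite r0 in hS hQ *.
have cP : #|predC1 i0| = (n - 1)%N by rewrite cardC1 card_ord subn1.
case: hn => ?; subst n.
- have := @key algR _ (predC1 i0) r 18 64 304 34 (17/10) cP.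
  have t0 : 0 < 17/10 :> algR by lra.
  have hS' : \sum_(i < 20 | i != i0) r i ^+ 2 = 64 by move: hS; rewrite natrM; lra.
  have hQ' : 304 <= \sum_(i < 20 | i != i0) r i ^+ 4 by move: hQ; rewrite natrM; lra.
  move=> /(_ t0 hS' hQ' (@cond20 algR)) h.
  have -> : `|4 : algR| = 4 by rewrite ger0_norm.
  have h' : \sum_(i < 20 | i != i0) `|r i| < 34 := h.
  rewrite (_ : (20 - 1)%N = 19%N) //; lra.
- have := @key algR _ (predC1 i0) r 19 68 332 36 (17/10) cP.
  have t0 : 0 < 17/10 :> algR by lra.
  have hS' : \sum_(i < 21 | i != i0) r i ^+ 2 = 68 by move: hS; rewrite natrM; lra.
  have hQ' : 332 <= \sum_(i < 21 | i != i0) r i ^+ 4 by move: hQ; rewrite natrM; lra.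
  move=> /(_ t0 hS' hQ' (@cond21 algR)) h.
  have -> : `|4 : algR| = 4 by rewrite ger0_norm.
  have h' : \sum_(i < 21 | i != i0) `|r i| < 36 := h.
  rewrite (_ : (21 - 1)%N = 20%N) //; lra.
Qed.
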